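(* Let $p$ be a prime, $n\geq1$, and let $f\in\mathcal{Q}_n$ have degree $m\geq1$. Then for each $1\leq k\leq m$ there exists $q_k\in\mathbb{Z}[X]$ of degree $m-k$ such that $$f(X)=q_k(X)G_k(X)+R_{k-1}(X),\qquad R_{k-1}(X)=f(0)+\sum_{h=1}^{k-1}q_h(hp)G_h(X),$$ and $q_k(X)=q_{k+1}(X)(X-kp)+q_k(kp)$ for $k=1,\dots,m-1$. Moreover, for each such $k$: (i) if $v_p((pk)!)<n$, then $p^{\,n-v_p((pk)!)}$ divides $q_k(kp)$; (ii) $q_k(kp)G_k(X)\in\mathcal{Q}_n$, and if $k<p$ then $q_k(kp)G_k(X)\in\mathcal{M}^n$; (iii) $R_{k-1}\in\mathcal{Q}_n$ for all $k=1,\dots,m$, and $R_{k-1}\in\mathcal{M}^n$ for all $k$ with $1\leq k\leq\min(m,p)$.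
   Context: Fix a prime $p$ and $n\geq 1$. $\mathcal{M}=(p,X)\subseteq\mathbb{Z}[X]$ and $\mathcal{Q}_n=\bigcap_{i\in\{0,\dots,p^n-1\},\ p\mid i}(p^n,X-i)$, i.e. the set of $f\in\mathbb{Z}[X]$ with $p^n\mid f(i)$ for every integer $i$ divisible by $p$. For $k\geq1$, $G_k(X)=\prod_{h=0}^{k-1}(X-hp)$, and $G_0(X)=1$. $v_p$ denotes the $p$-adic valuation. *)

(* Defs.v *)
From HB Require Import structures.
From mathcomp Require Import all_boot all_order all_algebra.
Set Implicit Arguments. Unset Strict Implicit. Unset Printing Implicit Defensive.
Import Order.TTheory GRing.Theory Num.Theory.
Local Open Scope ring_scope.

Definition in_ideal_aXc (a c : int) (f : {poly int}) : Prop :=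
  exists u v : {poly int}, f = a%:P * u + ('X - c%:P) * v.

Definition inQ (p n : nat) (f : {poly int}) : Prop :=
  forall i : nat, (i < p ^ n)%N -> (p %| i)%N ->
    in_ideal_aXc ((p ^ n)%:Z) (i%:Z) f.

(* M^n where M = (p, X): ideal generated by the p^j X^(n-j), 0 <= j <= n *)
Definition inMpow (p n : nat) (f : {poly int}) : Prop :=
  exists g : nat -> {poly int},
    f = \sum_(j < n.+1) ((p ^ j)%:Z)%:P * 'X^(n - j) * g j.

Definition G (p k : nat) : {poly int} :=
  \prod_(h < k) ('X - ((h * p)%N%:Z)%:P).

(* R_{k-1}(X) = f(0) + sum_{h=1}^{k-1} q_h(hp) G_h(X); here Rpoly f q p k = R_{k-1} *)
Definition Rpoly (f : {poly int}) (q : nat -> {poly int}) (p k : nat) : {poly int} :=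
  (f.[0])%:P + \sum_(1 <= h < k) (q h).[(h * p)%N%:Z] *: G p h.

(* Main.v *)
Require Import Defs.
From HB Require Import structures.
From mathcomp Require Import all_boot all_order all_algebra.
From mathcomp Require Import zify ring.
Import Order.TTheory GRing.Theory Num.Theory.
Local Open Scope ring_scope.

Local Open Scope nat_scope.
Lemma logn_fact_add p h a : prime p -> (a < p)%N -> logn p (p * h + a)`! = logn p (p * h)`!.
Proof.
move=> pp; elim: a => [|a IH] ha; first by rewrite addn0.
rewrite addnS factS lognM ?fact_gt0 // IH ?(ltnW ha) // logn_coprime //.
rewrite prime_coprime // -addnS dvdn_addr ?dvdn_mulr //.
by rewrite gtnNdvd.
Qed.
Lemma logn_factpk p h : prime p -> logn p (p * h)`! = h + logn p h`!.
Proof.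
move=> pp; have p0 := prime_gt0 pp.
elim: h => [|h IH]; first by rewrite muln0.
have E : (p * h.+1 = (p * h + p.-1).+1)%N by rewrite mulnS; lia.
rewrite E factS lognM ?fact_gt0 // logn_fact_add // ?prednK // ?ltn_predL //.
rewrite -E lognM // (logn_prime _ pp) eqxx IH factS (lognM _ (ltn0Sn h)) ?fact_gt0 //.
lia.
Qed.

Local Open Scope ring_scope.

Lemma factor_ex (g : {poly int}) (a : int) :
  exists q : {poly int}, g - (g.[a])%:P == q * ('X - a%:P).
Proof.
have /factor_theorem [q ->] : root (g - (g.[a])%:P) a.
  by rewrite /root !hornerE subrr.
by exists q.
Qed.

Definition step (g : {poly int}) (a : int) := xchoose (factor_ex g a).

Lemma stepP g a : g = step g a * ('X - a%:P) + (g.[a])%:P.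
Proof. by rewrite /step -(eqP (xchooseP (factor_ex g a))) addrNK. Qed.

Lemma horner_diff (g : {poly int}) (x y : int) : (x - y %| g.[x] - g.[y])%Z.
Proof.
have := stepP g y => E. rewrite {1}E !hornerE addrK.
by rewrite dvdz_mull // dvdzz.
Qed.

Fixpoint qq (f : {poly int}) (p k : nat) : {poly int} :=
  match k with 0 => f | k'.+1 => step (qq f p k') (k' * p)%N%:Z end.

Definition cc f p k := (qq f p k).[(k * p)%N%:Z].

Lemma qq_rec f p k : qq f p k = qq f p k.+1 * ('X - ((k * p)%N%:Z)%:P) + (cc f p k)%:P.
Proof. exact: stepP. Qed.

Lemma G0 p : G p 0 = 1. Proof. by rewrite /G big_ord0. Qed.
Lemma GS p k : G p k.+1 = G p k * ('X - ((k * p)%N%:Z)%:P).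
Proof. by rewrite /G big_ord_recr. Qed.

Lemma expand f p k : f = qq f p k * G p k + \sum_(h < k) cc f p h *: G p h.
Proof.
elim: k => [|k IH]; first by rewrite G0 big_ord0 mulr1 addr0.
have E := qq_rec f p k; set Q := qq f p k.+1 in E *.
rewrite big_ord_recr /= GS {1}IH {1}E -mul_polyC.
ring.
Qed.

Definition Ev p n (g : {poly int}) :=
  forall j : nat, ((p ^ n)%N%:Z %| g.[(j * p)%N%:Z])%Z.

Lemma Ev_inQ p n g : Ev p n g -> inQ p n g.
Proof.
move=> He i _ /dvdnP [j ->].
have /dvdzP [t Ht] := He j.
exists t%:P, (step g (j * p)%N%:Z).
by rewrite {1}(stepP g (j * p)%N%:Z) Ht polyCM; ring.
Qed.

Lemma inQ_Ev p n g : prime p -> (1 <= n)%N -> inQ p n g -> Ev p n g.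
Proof.
move=> pp n1 HQ j.
have pn0 : (0 < p ^ n)%N by rewrite expn_gt0 prime_gt0.
set x := (j * p)%N; set i := (x %% p ^ n)%N.
have [u [v Huv]] : in_ideal_aXc (p ^ n)%N%:Z i%:Z g.
  apply: HQ; first exact: ltn_pmod.
  have : (p %| x)%N by rewrite /x dvdn_mull.
  rewrite {1}(divn_eq x (p ^ n)) dvdn_addr //.
  by apply: dvdn_mull; rewrite -{1}(expn1 p) dvdn_exp2l.
have Hi : g.[i%:Z] = (p ^ n)%N%:Z * u.[i%:Z] by rewrite Huv !hornerE subrr; ring.
have Hd : ((p ^ n)%N%:Z %| x%:Z - i%:Z)%Z.
  rewrite {1}(divn_eq x (p ^ n)) PoszD addrK PoszM.
  exact: dvdz_mull (dvdzz _).
have := horner_diff g x%:Z i%:Z.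
move=> /(dvdz_trans Hd) H.
have -> : g.[x%:Z] = (g.[x%:Z] - g.[i%:Z]) + g.[i%:Z] by rewrite subrK.
by rewrite rpredD // Hi dvdz_mulr.
Qed.

Lemma G_eval_ge p h j : (h <= j)%N ->
  (G p h).[(j * p)%N%:Z] = (j ^_ h * p ^ h)%N%:Z.
Proof.
move=> hj; rewrite /G horner_prod.
under eq_bigr => i _ do rewrite hornerXsubC subzn ?leq_mul2r ?(leq_trans (ltnW (ltn_ord i))) ?orbT // -mulnBl.
under eq_bigr => i _ do rewrite -natz.
rewrite -natr_prod natz; congr Posz.
by rewrite big_split /= ffact_prod prod_nat_const cardT size_enum_ord.
Qed.

Lemma G_eval_lt p h j : (j < h)%N -> (G p h).[(j * p)%N%:Z] = 0.
Proof.
move=> jh; rewrite /G horner_prod (bigD1 (Ordinal jh)) //= hornerXsubC subrr.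
by rewrite mul0r.
Qed.

Lemma logn_G p k : prime p -> logn p (k`! * p ^ k) = logn p (p * k)`!.
Proof.
move=> pp; rewrite logn_factpk // lognM ?fact_gt0 ?expn_gt0 ?prime_gt0 //.
by rewrite pfactorK // addnC.
Qed.

Lemma G_eval_dvd p h j : prime p ->
  ((p ^ logn p (p * h)`!)%N%:Z %| (G p h).[(j * p)%N%:Z])%Z.
Proof.
move=> pp; case: (leqP h j) => hj; last by rewrite G_eval_lt // dvdz0.
rewrite G_eval_ge // dvdzE /= -logn_G // lognM ?fact_gt0 ?expn_gt0 ?prime_gt0 //.
rewrite expnD dvdn_mul //; last by rewrite pfactorK ?dvdnn.
apply: dvdn_trans (pfactor_dvdnn _ _) _.
by rewrite -bin_ffact dvdn_mull.
Qed.

Lemma horner_sumZ (I : finType) (F : I -> int) (H : I -> {poly int}) x :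
  (\sum_(i : I) F i *: H i).[x] = \sum_(i : I) F i * (H i).[x].
Proof. by rewrite horner_sum; apply: eq_bigr => i _; rewrite hornerZ. Qed.

Lemma Pmain p n f : prime p -> Ev p n f -> forall k,
  ((p ^ n)%N%:Z %| cc f p k * (p ^ logn p (p * k)`!)%N%:Z)%Z.
Proof.
move=> pp Hf; elim/ltn_ind => k IH.
set x := (k * p)%N%:Z.
have Ex := congr1 (fun g => g.[x]) (expand f p k.+1); simpl in Ex.
rewrite hornerD hornerM G_eval_lt // mulr0 add0r horner_sumZ big_ord_recr /= in Ex.
have H1 : ((p ^ n)%N%:Z %| cc f p k * (G p k).[x])%Z.
  have -> : cc f p k * (G p k).[x] =
     f.[x] - \sum_(i < k) cc f p i * (G p i).[x].
    by rewrite {1}Ex addrAC subrr add0r.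
  rewrite rpredB ?Hf // rpred_sum // => i _.
  apply: dvdz_trans (IH i (ltn_ord i)) _.
  by apply: dvdz_mul (dvdzz _) (G_eval_dvd _ _ _ pp).
rewrite /x G_eval_ge // ffactnn in H1.
have Npos : (0 < k`! * p ^ k)%N by rewrite muln_gt0 fact_gt0 expn_gt0 prime_gt0.
have [u cu Hu] := pfactor_coprime pp Npos.
rewrite Hu logn_G // in H1.
have E2 : cc f p k * (u * p ^ logn p (p * k)`!)%N%:Z =
   (cc f p k * (p ^ logn p (p * k)`!)%N%:Z) * u%:Z by rewrite PoszM; ring.
rewrite E2 Gauss_dvdzl // in H1.
by rewrite coprimezE /= coprimeXl.
Qed.

Lemma size_qq (p m : nat) (f : {poly int}) : size f = m.+1 -> forall k, (k <= m)%N -> size (qq f p k) = (m - k).+1.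
Proof.
move=> Hf; elim => [|k IH] km; first by rewrite subn0.
have IHk := IH (ltnW km).
have E := qq_rec f p k; set Q := qq f p k.+1 in E *.
have E2 : Q * ('X - ((k * p)%N%:Z)%:P) = qq f p k - (cc f p k)%:P.
  by rewrite {1}E addrK.
have Hs : size (qq f p k - (cc f p k)%:P) = (m - k).+1.
  rewrite size_polyDl IHk // size_polyN (leq_ltn_trans (size_polyC_leq1 _)) //.
  lia.
have Q0 : Q != 0.
  by apply/eqP => Q0; move: Hs; rewrite -E2 Q0 mul0r size_poly0.
move: Hs; rewrite -E2 size_Mmonic ?monicXsubC // size_XsubC.
lia.
Qed.

Lemma Rpoly_eq f p k : (1 <= k)%N ->
  Rpoly f (qq f p) p k = \sum_(h < k) cc f p h *: G p h.
Proof.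
move=> k1; rewrite /Rpoly -(big_mkord xpredT (fun h => cc f p h *: G p h)).
rewrite (big_ltn k1) G0 /cc mul0n alg_polyC.
by [].
Qed.

Definition Dv p n (g : {poly int}) :=
  forall i, (i < n)%N -> ((p ^ (n - i))%N%:Z %| g`_i)%Z.

Lemma Dv_inMpow p n g : Dv p n g -> inMpow p n g.
Proof.
move=> H.
exists (fun j => if j is j'.+1 then ((g`_(n - j'.+1) %/ (p ^ j'.+1)%N%:Z)%Z)%:P
                 else drop_poly n g).
rewrite big_ord_recl /= subn0 expn0 mul1r.
rewrite -{1}(poly_take_drop n g) addrC mulrC; congr (_ + _).
rewrite /take_poly poly_def (reindex_inj rev_ord_inj) /=.
apply: eq_bigr => i _.
rewrite /bump /= add0n add1n.
have Hd := H (n - i.+1)%N ltac:(have := ltn_ord i; lia).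
move: Hd; rewrite (_ : (n - (n - i.+1) = i.+1)%N); last by have := ltn_ord i; lia.
move=> /divzK Hd.
by rewrite -mulrA [_ * _%:P]mulrC mulrA -polyCM [X in (X)%:P * _]mulrC Hd mul_polyC.
Qed.

Lemma dvd_pow_le p a b x : (b <= a)%N ->
  ((p ^ a)%N%:Z %| x)%Z -> ((p ^ b)%N%:Z %| x)%Z.
Proof.
move=> ba; apply: dvdz_trans; rewrite dvdzE /=.
exact: dvdn_exp2l.
Qed.

Lemma Gcoef p k i : ((p ^ (k - i))%N%:Z %| (G p k)`_i)%Z.
Proof.
elim: k i => [|k IH] i.
  by rewrite sub0n expn0 dvd1z.
rewrite GS mulrBr coefB coefMX coefMC rpredB //.
  by case: i => [|i] //=; rewrite ?dvdz0 // subSS IH.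
apply: dvd_pow_le (_ : (k.+1 - i <= k - i + 1)%N) _; first lia.
rewrite expnD expn1 (PoszM (p ^ (k - i))%N p); apply: dvdz_mul (IH i) _.
by rewrite dvdzE /= dvdn_mull.
Qed.

Lemma shift_dvd p n k i c : prime p -> (i < n)%N ->
  ((p ^ n)%N%:Z %| c * (p ^ k)%N%:Z)%Z ->
  ((p ^ (n - i))%N%:Z %| c * (p ^ (k - i))%N%:Z)%Z.
Proof.
move=> pp inn H.
have H2 : ((p ^ n)%N%:Z %| c * (p ^ k)%N%:Z * (p ^ (i - k))%N%:Z)%Z.
  exact: dvdz_mulr.
have E1 : c * (p ^ k)%N%:Z * (p ^ (i - k))%N%:Z =
          c * (p ^ (k - i))%N%:Z * (p ^ i)%N%:Z.
  rewrite -mulrA -PoszM -expnD -mulrA -PoszM -expnD.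
  by rewrite (_ : (k + (i - k) = k - i + i)%N) //; lia.
have E2 : (p ^ n)%N%:Z = (p ^ (n - i))%N%:Z * (p ^ i)%N%:Z.
  by rewrite -PoszM -expnD subnK // ltnW.
rewrite E1 E2 dvdz_mul2r // in H2.
by rewrite -[0]/(Posz 0%N) eqz_nat expn_eq0 negb_and -lt0n prime_gt0.
Qed.

Lemma Dv_scaleG p n k c : prime p ->
  ((p ^ n)%N%:Z %| c * (p ^ k)%N%:Z)%Z -> Dv p n (c *: G p k).
Proof.
move=> pp H i inn; rewrite coefZ.
have /dvdzP [t Ht] := Gcoef p k i.
rewrite Ht mulrCA; apply: dvdz_mull.
exact: shift_dvd.
Qed.

Lemma Dv_add p n g h : Dv p n g -> Dv p n h -> Dv p n (g + h).
Proof. by move=> Hg Hh i inn; rewrite coefD rpredD ?Hg ?Hh. Qed.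

Lemma Dv_sum p n k (F : nat -> {poly int}) :
  (forall h, (h < k)%N -> Dv p n (F h)) -> Dv p n (\sum_(h < k) F h).
Proof.
move=> H i inn; rewrite coef_sum rpred_sum // => h _.
exact: H (ltn_ord h) i inn.
Qed.

Lemma Dv_const p n c : ((p ^ n)%N%:Z %| c)%Z -> Dv p n c%:P.
Proof. by move=> H [|i] inn; rewrite coefC //= subn0. Qed.

Lemma Ev_add p n g h : Ev p n g -> Ev p n h -> Ev p n (g + h).
Proof. by move=> Hg Hh j; rewrite hornerD rpredD ?Hg ?Hh. Qed.

Lemma Ev_sum p n k (F : nat -> {poly int}) :
  (forall h, (h < k)%N -> Ev p n (F h)) -> Ev p n (\sum_(h < k) F h).
Proof.
move=> H j; rewrite horner_sum rpred_sum // => h _.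
exact: H (ltn_ord h) j.
Qed.

Lemma Ev_scaleG p n k c : prime p ->
  ((p ^ n)%N%:Z %| c * (p ^ logn p (p * k)`!)%N%:Z)%Z -> Ev p n (c *: G p k).
Proof.
move=> pp H j; rewrite hornerZ.
have /dvdzP [t Ht] := G_eval_dvd p k j pp.
by rewrite Ht mulrCA dvdz_mull.
Qed.

Lemma logn_fact_small p k : prime p -> (k < p)%N -> logn p (p * k)`! = k.
Proof.
move=> pp kp; rewrite logn_factpk // logn_fact // big1_seq ?addn0 // => i.
rewrite mem_index_iota => /andP [_ /andP [i1 _]].
apply: divn_small; apply: leq_trans kp _.
exact: (leq_pexp2l (prime_gt0 pp) i1).
Qed.


Theorem mainTheorem11 (p n m : nat) (f : {poly int}) :
  prime p -> (1 <= n)%N -> inQ p n f -> (1 <= m)%N -> size f = m.+1 ->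
  exists q : nat -> {poly int},
    (forall k : nat, (1 <= k <= m)%N ->
       size (q k) = (m - k).+1 /\ f = q k * G p k + Rpoly f q p k)
    /\ (forall k : nat, (1 <= k <= m - 1)%N ->
       q k = q k.+1 * ('X - ((k * p)%N%:Z)%:P) + ((q k).[(k * p)%N%:Z])%:P)
    /\ (forall k : nat, (1 <= k <= m)%N ->
         ((logn p (p * k)`! < n)%N ->
            ((p ^ (n - logn p (p * k)`!))%N%:Z %| (q k).[(k * p)%N%:Z])%Z)
      /\ (inQ p n ((q k).[(k * p)%N%:Z] *: G p k)
          /\ ((k < p)%N -> inMpow p n ((q k).[(k * p)%N%:Z] *: G p k)))
      /\ (inQ p n (Rpoly f q p k)
          /\ ((k <= minn m p)%N -> inMpow p n (Rpoly f q p k)))).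
Proof.
move=> pp n1 HQ m1 Hsize.
have Ef := inQ_Ev _ _ _ pp n1 HQ.
have HP := Pmain _ _ _ pp Ef.
exists (qq f p).
split.
  move=> k /andP [k1 km]; split; first exact: size_qq.
  by rewrite Rpoly_eq // {1}(expand f p k).
split.
  by move=> k _; exact: qq_rec.
move=> k /andP [k1 km].
have HPk := HP k.
split.
  move=> lt.
  have E2 : (p ^ n)%N%:Z = (p ^ (n - logn p (p * k)`!))%N%:Z * (p ^ logn p (p * k)`!)%N%:Z.
    by rewrite -PoszM -expnD subnK // ltnW.
  move: HPk; rewrite E2 dvdz_mul2r //.
  by rewrite -[0]/(Posz 0%N) eqz_nat expn_eq0 negb_and -lt0n prime_gt0.
split.
  split; first exact: Ev_inQ (Ev_scaleG _ _ _ _ pp HPk).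
  move=> kp; apply: Dv_inMpow; apply: (Dv_scaleG _ _ _ _ pp).
  by move: HPk; rewrite (logn_fact_small _ _ pp kp).
split.
  rewrite Rpoly_eq //; apply: Ev_inQ; apply: (Ev_sum _ _ _ (fun h => cc f p h *: G p h)) => h _.
  exact: (Ev_scaleG _ _ _ _ pp (HP h)).
move=> kmp; rewrite Rpoly_eq //; apply: Dv_inMpow; apply: (Dv_sum _ _ _ (fun h => cc f p h *: G p h)) => h hk.
have hp : (h < p)%N by apply: leq_trans hk (leq_trans kmp (geq_minr _ _)).
apply: (Dv_scaleG _ _ _ _ pp).
by move: (HP h); rewrite (logn_fact_small _ _ pp hp).
Qed.
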